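(* Let $\mathcal T=(S,\Sigma,\kappa)$ be an STS and $B\in\Sigma$. Suppose $A\in\Sigma$ is an attractor, i.e., $\mathbb P^{\mathcal T}_\mu(\mathbf{GF}A)=1$ for every $\mu\in\mathrm{Dist}(S)$, and suppose there is $p>0$ such that for every $\nu\in\mathrm{Dist}(S)$ with $\nu(A\cap\overline{\widetilde B})=1$ we have $\mathbb P^{\mathcal T}_\nu(\mathbf F B)\ge p$. Then $\mathcal T$ is decisive with respect to $B$.
   Context: A stochastic transition system (STS) is a triple $\mathcal T=(S,\Sigma,\kappa)$ where $(S,\Sigma)$ is a measurable space and $\kappa:S\times\Sigma\to[0,1]$ is a Markov kernel. $\mathrm{Dist}(S)$: probability distributions on $(S,\Sigma)$; $\delta_s$: Dirac at $s$. $\mathbb P^{\mathcal T}_\mu$ is the probability measure on runs $S^\omega$ (with the $\sigma$-algebra generated by cylinders) induced by initial distribution $\mu$ and kernel $\kappa$. $\overline C=S\setminus C$; $\mathbf F B$: runs visiting $B$ at some step; $\mathbf{GF}A$: runs visiting $A$ infinitely often. $\widetilde B=\{s\in S:\mathbb P^{\mathcal T}_{\delta_s}(\mathbf F B)=0\}$ (assumed measurable). $\mathcal T$ is decisive w.r.t. $B$ if for every $\mu$, $\mathbb P^{\mathcal T}_\mu(\mathbf F B\vee\mathbf F\widetilde B)=1$. *)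

(* Defs.v *)
From HB Require Import structures.
From mathcomp Require Import all_boot all_order all_algebra.
From mathcomp Require Import all_classical all_reals all_analysis.

Set Implicit Arguments.
Unset Strict Implicit.
Unset Printing Implicit Defensive.

Import Order.TTheory GRing.Theory Num.Theory.
Local Open Scope classical_set_scope.
Local Open Scope ring_scope.

Section STS.
Context d (S : measurableType d) (R : realType).

Definition run := nat -> S.

Definition cyl (n : nat) (As : nat -> set S) : set run :=
  [set w | forall i, (i <= n)%N -> As i (w i)].

Definition cylinders : set (set run) :=
  [set C | exists n (As : nat -> set S),
     (forall i, measurable (As i)) /\ C = cyl n As].

Definition runs := g_sigma_algebraType cylinders.

(** P is the run measure P_mu induced by the initial distribution mu and the
    Markov kernel k: initial law mu, and the one-step transition from w n
    to w (n+1) is given by k (w n), for every cylinder history. These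
    equations determine P uniquely on the cylinder sigma-algebra. *)
Definition is_run_measure (k : R.-pker S ~> S) (mu : probability S R)
    (P : probability runs R) : Prop :=
  (forall A : set S, measurable A -> P [set w : runs | A (w 0%N)] = mu A) /\
  (forall (n : nat) (As : nat -> set S) (A : set S),
      (forall i, measurable (As i)) -> measurable A ->
      P (cyl n As `&` [set w : runs | A (w n.+1)]) =
      (\int[P]_(w in (cyl n As : set runs)) k (w n) A)%E).

Definition evF (B : set S) : set runs := [set w | exists n, B (w n)].

Definition evGF (A : set S) : set runs :=
  [set w | forall m, exists2 n, (m <= n)%N & A (w n)].

Definition tildeB (Pr : probability S R -> probability runs R) (B : set S)
  : set S := [set s | Pr (\d_s : probability S R) (evF B) = 0%E].

Definition decisive (Pr : probability S R -> probability runs R) (B : set S)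
  : Prop :=
  forall mu : probability S R, Pr mu (evF B `|` evF (tildeB Pr B)) = 1%E.

End STS.

(* Main.v *)
Require Import Defs.
From HB Require Import structures.
From mathcomp Require Import all_boot all_order all_algebra.
From mathcomp Require Import all_classical all_reals all_analysis.
From mathcomp Require Import measurable_realfun zify lra.
Import Order.TTheory GRing.Theory Num.Theory.
Local Open Scope classical_set_scope.
Local Open Scope ring_scope.

Set Implicit Arguments.
Unset Strict Implicit.
Unset Printing Implicit Defensive.


Section Cyl.
Context d (S : measurableType d).

Lemma cyl_meas n (As : nat -> set S) : (forall i, measurable (As i)) ->
  measurable (cyl n As : set (runs S)).
Proof. by move=> mAs; apply: sub_gen_smallest; exists n, As. Qed.

Definition upd (As : nat -> set S) n (X : set S) :=
  fun i => if i == n then As i `&` X else As i.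

Lemma upd_meas As n X : (forall i, measurable (As i)) -> measurable X ->
  forall i, measurable (upd As n X i).
Proof. by move=> mAs mX i; rewrite /upd; case: ifP => _ //; exact: measurableI. Qed.

Lemma eq_cyl n (As Bs : nat -> set S) : (forall i, (i <= n)%N -> As i = Bs i) ->
  cyl n As = cyl n Bs.
Proof.
move=> h; apply/seteqP; split => w /= H i lin; first by rewrite -h //; exact: H.
by rewrite h //; exact: H.
Qed.

Lemma cyl_upd n As X :
  [set w : run S | X (w n)] `&` cyl n As = cyl n (upd As n X).
Proof.
apply/seteqP; split => w /=.
  move=> [Xw H] i lin; rewrite /upd; case: eqP => [->|_]; last exact: H.
  by split => //; exact: H.
move=> H; split.
  by have := H n (leqnn n); rewrite /upd eqxx => -[].
move=> i lin; have := H i lin; rewrite /upd; case: eqP => [_ []//|//].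
Qed.

Lemma cylS n As :
  cyl n.+1 As = cyl n As `&` [set w : run S | As n.+1 (w n.+1)].
Proof.
apply/seteqP; split => w /=.
  by move=> H; split => [i lin|]; apply: H => //; exact: leqW.
move=> [H1 H2] i; rewrite leq_eqVlt => /orP[/eqP ->//|]; rewrite ltnS; exact: H1.
Qed.

Lemma cyl0 As : cyl 0 As = [set w : run S | As 0%N (w 0%N)].
Proof.
apply/seteqP; split => w /=; first by apply.
by move=> H i; rewrite leqn0 => /eqP ->.
Qed.

Lemma proj_meas N : measurable_fun setT (fun w : runs S => w N).
Proof.
move=> _ X mX; rewrite setTI.
have -> : (fun w : runs S => w N) @^-1` X =
   cyl N (fun i => if i == N then X else setT).
  apply/seteqP; split => w /=.
    by move=> Xw i _; case: eqP => [->|].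
  by move=> H; have := H N (leqnn N); rewrite eqxx.
by apply: cyl_meas => i; case: ifP.
Qed.

End Cyl.


Section IntEq.
Local Open Scope ereal_scope.
Context d1 d2 d3 (X1 : measurableType d1) (X2 : measurableType d2)
  (Y : measurableType d3) (R : realType).
Variables (m1 : {measure set X1 -> \bar R}) (m2 : {measure set X2 -> \bar R}).
Variables (D1 : set X1) (D2 : set X2) (mD1 : measurable D1) (mD2 : measurable D2).
Variables (phi1 : X1 -> Y) (phi2 : X2 -> Y).
Hypotheses (mphi1 : measurable_fun setT phi1) (mphi2 : measurable_fun setT phi2).
Variables (c : R) (c0 : (0 <= c)%R).
Hypothesis H : forall E, measurable E ->
  m1 (phi1 @^-1` E `&` D1) = c%:E * m2 (phi2 @^-1` E `&` D2).

Import HBNNSimple.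

Let int_indic E (mE : measurable E) :
  \int[m1]_(x in D1) (\1_E (phi1 x))%:E =
  c%:E * \int[m2]_(x in D2) (\1_E (phi2 x))%:E.
Proof.
have e1 : forall x, \1_E (phi1 x) = \1_(phi1 @^-1` E) x :> R by [].
have e2 : forall x, \1_E (phi2 x) = \1_(phi2 @^-1` E) x :> R by [].
under eq_integral do rewrite e1.
under [X in _ = _ * X]eq_integral do rewrite e2.
rewrite !integral_indic //.
- by apply H.
- by rewrite -(setTI (_ @^-1` _)); exact: mphi2.
- by rewrite -(setTI (_ @^-1` _)); exact: mphi1.
Qed.

Let int_nnsfun (h : {nnsfun Y >-> R}) :
  \int[m1]_(x in D1) (h (phi1 x))%:E = c%:E * \int[m2]_(x in D2) (h (phi2 x))%:E.
Proof.
under eq_integral do rewrite fimfunE -fsumEFin//.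
rewrite [LHS]ge0_integral_fsum//; last 2 first.
  - move=> r; apply/measurable_EFinP; apply: measurable_funTS.
    have M : measurable_fun setT (fun y => (r * \1_(h @^-1` [set r]) y)%R).
      by apply: measurable_funM => //; apply: measurable_indic.
    exact: (measurableT_comp M mphi1).
  - by move=> n x _; rewrite EFinM nnfun_muleindic_ge0.
under [in RHS]eq_integral do rewrite fimfunE -fsumEFin//.
rewrite [X in _ = _ * X]ge0_integral_fsum//; last 2 first.
  - move=> r; apply/measurable_EFinP; apply: measurable_funTS.
    have M : measurable_fun setT (fun y => (r * \1_(h @^-1` [set r]) y)%R).
      by apply: measurable_funM => //; apply: measurable_indic.

    exact: (measurableT_comp M mphi2).
  - by move=> n x _; rewrite EFinM nnfun_muleindic_ge0.
rewrite ge0_mule_fsumr; last first.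
  move=> r; apply: integral_ge0 => x _; rewrite EFinM nnfun_muleindic_ge0 //.
apply: eq_fsbigr => r _.
have [r0|r0] := leP 0%R r; last first.
  have E : h @^-1` [set r] = set0 by exact: preimage_nnfun0.
  under eq_integral do rewrite E indic0 mulr0.
  under [in RHS]eq_integral do rewrite E indic0 mulr0.
  by rewrite !integral0 mule0.
have M : measurable_fun setT (EFin \o \1_(h @^-1` [set r]) : Y -> \bar R).
  by apply/measurable_EFinP; apply: measurable_indic.
have M1 : measurable_fun D1 (fun x => (\1_(h @^-1` [set r]) (phi1 x) : R)%:E).
  exact: (measurable_funTS (measurableT_comp M mphi1)).
have M2 : measurable_fun D2 (fun x => (\1_(h @^-1` [set r]) (phi2 x) : R)%:E).
  exact: (measurable_funTS (measurableT_comp M mphi2)).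
have P1 : forall x, D1 x -> 0 <= (\1_(h @^-1` [set r]) (phi1 x) : R)%:E.
  by move=> x _; rewrite lee_fin.
have P2 : forall x, D2 x -> 0 <= (\1_(h @^-1` [set r]) (phi2 x) : R)%:E.
  by move=> x _; rewrite lee_fin.
under eq_integral do rewrite EFinM.
under [in RHS]eq_integral do rewrite EFinM.
rewrite ge0_integralZl// ge0_integralZl//.
by rewrite int_indic// muleCA.
Qed.

Lemma int_eq (f : Y -> \bar R) : measurable_fun setT f -> (forall y, 0 <= f y) ->
  \int[m1]_(x in D1) f (phi1 x) = c%:E * \int[m2]_(x in D2) f (phi2 x).
Proof.
move=> mf f0.
pose f_ := nnsfun_approx measurableT mf.
have cvgf : forall y, (EFin \o (fun n => f_ n y)) x @[x --> \oo] --> f y.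
  by move=> y; apply: cvg_nnsfun_approx => //.
have ndf : forall y a b, (a <= b)%N -> (f_ a y <= f_ b y)%R.
  by move=> y a b ab; exact/lefP/nd_nnsfun_approx.
have mfn : forall dd (X : measurableType dd) (phi : X -> Y) (D : set X),
    measurable_fun setT phi -> forall n,
    measurable_fun D (fun x => (f_ n (phi x))%:E).
  move=> dd X phi D mphi n.
  have M : measurable_fun setT (EFin \o f_ n : Y -> \bar R).
    by apply/measurable_EFinP.
  exact: (measurable_funTS (measurableT_comp M mphi)).
transitivity (limn (fun n => \int[m1]_(x in D1) (f_ n (phi1 x))%:E)).
  rewrite -monotone_convergence//=.
  - apply: eq_integral => x _; apply/esym/cvg_lim => //; exact: cvgf.
  - by move=> n; exact: mfn.
  - by move=> n x _; rewrite lee_fin.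
  - by move=> x _ a b ab; rewrite lee_fin; exact: ndf.
rewrite (_ : \int[m2]_(x in D2) _ =
    limn (fun n => \int[m2]_(x in D2) (f_ n (phi2 x))%:E)); last first.
  rewrite -monotone_convergence//=.
  - apply: eq_integral => x _; apply/esym/cvg_lim => //; exact: cvgf.
  - by move=> n; exact: mfn.
  - by move=> n x _; rewrite lee_fin.
  - by move=> x _ a b ab; rewrite lee_fin; exact: ndf.
rewrite -limeMl//.
  by congr (limn _); apply/funext => n /=; rewrite int_nnsfun.
apply/ereal_nondecreasing_is_cvgn => a b ab; apply: ge0_le_integral => //.
- by move=> x _; rewrite lee_fin.
- exact: mfn.
- exact: mfn.
- by move=> x _; rewrite lee_fin; exact: ndf.
Qed.

End IntEq.


Section Markov.
Local Open Scope ereal_scope.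
Context d (S : measurableType d) (R : realType) (k : R.-pker S ~> S).
Variables (P Q : probability (runs S) R) (nu : probability S R).
Hypothesis HP2 : forall (n : nat) (As : nat -> set S) (A : set S),
      (forall i, measurable (As i)) -> measurable A ->
      P (cyl n As `&` [set w : runs S | A (w n.+1)]) =
      (\int[P]_(w in (cyl n As : set (runs S))) k (w n) A)%E.
Hypothesis HQ : is_run_measure k nu Q.
Variables (n : nat) (As : nat -> set S) (mAs : forall i, measurable (As i)).
Variables (c : R) (c0 : (0 <= c)%R).
Hypothesis Hnu : forall X, measurable X -> P (cyl n (upd As n X)) = c%:E * nu X.

Definition glue (Bs : nat -> set S) i :=
  if (i < n)%N then As i else if i == n then As n `&` Bs 0%N else Bs (i - n)%N.

Lemma glue_meas Bs : (forall i, measurable (Bs i)) -> forall i, measurable (glue Bs i).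
Proof.
move=> mBs i; rewrite /glue; case: ifP => _ //; case: ifP => _ //.
exact: measurableI.
Qed.

Lemma markov_cyl m Bs : (forall i, measurable (Bs i)) ->
  P (cyl (n + m) (glue Bs)) = c%:E * Q (cyl m Bs).
Proof.
elim: m Bs => [|m IH] Bs mBs.
  rewrite addn0 (@eq_cyl _ _ _ _ (upd As n (Bs 0%N))); last first.
    move=> i lin; rewrite /glue /upd; case: ltngtP => [//| |->//].
    by move=> ni; exfalso; lia.
  by rewrite Hnu // cyl0; case: HQ => HQ1 _; rewrite HQ1.
rewrite addnS !cylS.
have -> : glue Bs (n + m).+1 = Bs m.+1.
  rewrite /glue ifF; last by apply/negbTE; rewrite -leqNgt; lia.
  rewrite ifF; last by apply/eqP; lia.
  by congr Bs; lia.
rewrite HP2 //; last exact: glue_meas.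
case: HQ => _ ->//.
have mD1 : measurable (cyl (n + m) (glue Bs) : set (runs S)).
  exact: cyl_meas (glue_meas mBs).
have mD2 : measurable (cyl m Bs : set (runs S)) by exact: cyl_meas.
have HH : forall E, measurable E ->
    P ((fun w : runs S => w (n + m)%N) @^-1` E `&` cyl (n + m) (glue Bs)) =
    c%:E * Q ((fun w : runs S => w m) @^-1` E `&` cyl m Bs).
  move=> E mE.
  rewrite (cyl_upd (n + m)%N (glue Bs) E) (cyl_upd m Bs E).
  rewrite -IH; last exact: upd_meas.
  congr (P _); apply: eq_cyl => i lin; rewrite /glue /upd.
  case: ltngtP => [ilt|igt|->].
  + by rewrite ifF //; apply/eqP; lia.
  + have -> : (i - n == m)%N = (i == n + m)%N.
      by apply/idP/idP => /eqP h; apply/eqP; lia.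
    by [].
  + case: m {IH lin mD1 mD2} => [|m]; first by rewrite addn0 eqxx setIA.
    by rewrite ifF //; apply/eqP; lia.
exact: (@int_eq _ _ _ _ _ _ _ P Q _ _ mD1 mD2 (fun w => w (n + m)%N)
  (fun w => w m) (proj_meas _) (proj_meas _) c HH (fun x => k x (Bs m.+1))
  (measurable_kernel _ _ (mBs _)) (fun y => measure_ge0 _ _)).
Qed.

End Markov.


Lemma pre_meas d (S : measurableType d) N (X : set S) : measurable X ->
  measurable [set w : runs S | X (w N)].
Proof. by move=> mX; have := proj_meas N measurableT mX; rewrite setTI. Qed.

Section MuAt.
Local Open Scope ereal_scope.
Context d (S : measurableType d) (R : realType).
Variables (P : {measure set (runs S) -> \bar R}) (K : set (runs S)).
Variables (mK : measurable K) (N : nat).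

Definition mu_at (_ : measurable K) (X : set S) : \bar R := P ([set w : runs S | X (w N)] `&` K).

Let mu_at0 : mu_at mK set0 = 0.
Proof.
rewrite /mu_at (_ : [set w : runs S | (set0 : set S) (w N)] = set0).
  by rewrite set0I measure0.
by apply/seteqP; split => w.
Qed.

Let mu_at_ge0 X : 0 <= mu_at mK X.
Proof. exact: measure_ge0. Qed.

Let mu_at_sa : semi_sigma_additive (mu_at mK).
Proof.
move=> F mF tF mUF; rewrite /mu_at.
have -> : [set w : runs S | (\bigcup_n F n) (w N)] `&` K =
    \bigcup_n ([set w : runs S | F n (w N)] `&` K).
  apply/seteqP; split => w /=.
    by move=> [[i _ Fi] Kw]; exists i.
  by move=> [i _ [Fi Kw]]; split => //; exists i.
apply: measure_semi_sigma_additive.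
- by move=> i; apply: measurableI => //; exact: pre_meas.
- apply/trivIsetP => i j _ _ ij; move/trivIsetP: tF => /(_ i j Logic.I Logic.I ij) E0.
  apply/seteqP; split => // w /= [[a _] [b _]].
  have : (F i `&` F j) (w N) by [].
  by rewrite E0.
- apply: bigcupT_measurable => i; apply: measurableI => //; exact: pre_meas.
Qed.

HB.instance Definition _ := isMeasure.Build _ _ _ (mu_at mK) mu_at0 mu_at_ge0 mu_at_sa.

End MuAt.

Lemma le_lim_meas dT (T : measurableType dT) (R : realType) (Q : probability T R)
  (F : nat -> set T) (x : \bar R) (a : R) : (0 <= a)%R ->
  (forall j, measurable (F j)) -> {homo F : n m / (n <= m)%N >-> (n >= m)%O} ->
  (forall j, (x <= a%:E * Q (F j))%E) -> (x <= a%:E * Q (\bigcap_j F j))%E.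
Proof.
move=> a0 mF niF H.
have F0 : (Q (F 0%N) < +oo)%E.
  by apply: (le_lt_trans (probability_le1 _ (mF 0%N))); rewrite ltry.
have cv := nonincreasing_cvg_mu F0 mF (bigcapT_measurable mF) niF.
have cv2 := cvgeZl (y := a%:E) (fin_numE _) cv.
rewrite -(cvg_lim _ cv2) //; apply: lime_ge; first exact: cvgP cv2.
by apply: nearW => j /=.
Qed.

Lemma evF_meas d (S : measurableType d) (B : set S) : measurable B ->
  measurable (evF B : set (runs S)).
Proof.
move=> mB; rewrite (_ : evF B = \bigcup_i [set w : runs S | B (w i)]).
  by apply: bigcupT_measurable => i; exact: pre_meas.
by apply/seteqP; split => w /= [i]; [exists i | move=> _ Bi; exists i].
Qed.

Lemma cyl_noninc d (S : measurableType d) (Bs : nat -> set S) :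
  {homo (fun j => cyl j Bs : set (runs S)) : n m / (n <= m)%N >-> (n >= m)%O}.
Proof.
move=> a b ab; apply/subsetPset => w H i ia; apply: H; exact: leq_trans ia ab.
Qed.

Lemma bigcap_cylC d (S : measurableType d) (B : set S) :
  \bigcap_j (cyl j (fun _ => ~` B) : set (runs S)) = ~` evF B.
Proof.
apply/seteqP; split => w /=.
  by move=> H [i Bi]; exact: (H i Logic.I i (leqnn i) Bi).
by move=> H j _ i _ Bi; apply: H; exists i.
Qed.

Section Bound.
Local Open Scope ereal_scope.
Context d (S : measurableType d) (R : realType) (k : R.-pker S ~> S).
Variables (Pr : probability S R -> probability (runs S) R).
Hypothesis HPr : forall mu, is_run_measure k mu (Pr mu).
Variables (B A : set S) (mB : measurable B) (p : R).
Hypothesis Hp : forall nu : probability S R,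
  nu (A `&` ~` tildeB Pr B) = 1 -> p%:E <= Pr nu (evF B).
Variable mu : probability S R.

Lemma bound n As : (forall i, measurable (As i)) ->
  As n `<=` A `&` ~` tildeB Pr B ->
  Pr mu (cyl n As `&` [set w | forall i, ~ B (w (n + i)%N)]) <=
  (1 - p)%:E * Pr mu (cyl n As).
Proof.
move=> mAs sub.
set P := Pr mu.
have mK : measurable (cyl n As : set (runs S)) := cyl_meas n mAs.
have meT : measurable [set w : runs S | forall i, ~ B (w (n + i)%N)].
  rewrite (_ : [set w : runs S | _] = \bigcap_i [set w : runs S | (~` B) (w (n + i)%N)]).
    by apply: bigcapT_measurable => i; apply: pre_meas; exact: measurableC.
  by apply/seteqP; split => w /= H i; [move=> _; exact: H | exact: H i Logic.I].
have [K0|Kpos] : P (cyl n As) = 0 \/ 0 < P (cyl n As).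
  by have := measure_ge0 P (cyl n As); rewrite le_eqVlt => /orP[/eqP <-|->];
    [left|right].
  rewrite K0 mule0 -K0; exact: measureIl.
set cK := fine (P (cyl n As)).
have KcK : P (cyl n As) = cK%:E.
  rewrite /cK fineK // ge0_fin_numE ?measure_ge0 //.
  by apply: (le_lt_trans (probability_le1 _ mK)); rewrite ltry.
have cK0 : (0 < cK)%R by rewrite -lte_fin -KcK.
pose nu := mnormalize (mu_at P n mK) mu.
have ev : mu_at P n mK setT = cK%:E.
  by rewrite /mu_at (_ : [set w : runs S | setT (w n)] = setT) // setTI.
have nuE : forall X, nu X = mu_at P n mK X * (cK^-1)%:E.
  have ev2 : P ([set w : runs S | True] `&` cyl n As) = cK%:E := ev.
  move=> X; rewrite /nu /mnormalize /= ev2 ifF //.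
  by rewrite eqe gt_eqF.
have Hnu : forall X, measurable X -> P (cyl n (upd As n X)) = cK%:E * nu X.
  move=> X mX; rewrite nuE muleCA -EFinM mulfV ?gt_eqF // mule1.
  by rewrite /mu_at cyl_upd.
have nuT : nu (A `&` ~` tildeB Pr B) = 1.
  rewrite nuE /mu_at cyl_upd (_ : cyl n (upd As n _) = cyl n As); last first.
    apply: eq_cyl => i _; rewrite /upd; case: eqP => [->|//].
    exact/setIidl.
  transitivity (cK%:E * (cK^-1)%:E); first by congr (_ * _); exact: KcK.
  by rewrite -EFinM mulfV // gt_eqF.
have Hpnu := Hp nuT.
set Q := Pr nu.
have HP2 := (HPr mu).2.
have HQ := HPr nu.
have Mk := fun m => markov_cyl HP2 HQ mAs (ltW cK0) Hnu m
   (Bs := fun _ => ~` B) (fun _ => measurableC mB).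
apply: (@le_trans _ _ (cK%:E * Q (~` evF B))).
  rewrite -bigcap_cylC; apply: le_lim_meas.
  - exact: ltW.
  - by move=> j; apply: cyl_meas => _; exact: measurableC.
  - exact: cyl_noninc.
  move=> j; rewrite -Mk; apply: le_measure.
  - by rewrite inE; exact: measurableI.
  - by rewrite inE; apply: cyl_meas; apply: glue_meas => // _; exact: measurableC.
  move=> w [Kw Tw] i lei; rewrite /glue; case: (ltngtP i n) => [ilt|igt|->].
  - exact: Kw (ltnW ilt).
  - by have := Tw (i - n)%N; rewrite subnKC // ltnW.
  - split; first exact: Kw (leqnn n).
    by have := Tw 0%N; rewrite addn0.
rewrite KcK [X in _ <= X]muleC; apply: lee_wpmul2l; first by rewrite lee_fin ltW.
have mF := evF_meas mB.
rewrite probability_setC //.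
have fQ : Q (evF B) \is a fin_num.
  rewrite ge0_fin_numE ?measure_ge0 //.
  by apply: (le_lt_trans (probability_le1 _ mF)); rewrite ltry.
rewrite -(fineK fQ) -EFinB lee_fin lerB //.
by rewrite -lee_fin fineK.
Qed.
End Bound.

Unset Implicit Arguments.

Theorem mainTheorem4 (d : measure_display) (S : measurableType d)
  (R : realType) (k : R.-pker S ~> S)
  (Pr : probability S R -> probability (runs S) R)
  (HPr : forall mu, is_run_measure k mu (Pr mu))
  (B A : set S) (mB : measurable B) (mA : measurable A)
  (mtB : measurable (tildeB Pr B))
  (attractor : forall mu : probability S R, Pr mu (evGF A) = 1%E)
  (p : R) (p_gt0 : 0 < p)
  (Hp : forall nu : probability S R,
      nu (A `&` ~` tildeB Pr B) = 1%E -> (p%:E <= Pr nu (evF B))%E) :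
  decisive Pr B.
Proof.
set q := Num.min p 1.
have q0 : 0 < q by rewrite lt_min p_gt0 ltr01.
have q1 : q <= 1 by rewrite ge_min lexx orbT.
have Hq : forall nu : probability S R,
    nu (A `&` ~` tildeB Pr B) = 1%E -> (q%:E <= Pr nu (evF B))%E.
  move=> nu /Hp; apply: le_trans; rewrite lee_fin ge_min lexx //.
move=> mu.
set P := Pr mu.
set Bt := tildeB Pr B.
set T := A `&` ~` Bt.
set N := [set w : runs S | forall i, ~ B (w i) /\ ~ Bt (w i)].
have NC : evF B `|` evF Bt = ~` N.
  apply/seteqP; split => w /=.
    by move=> [[i Bi]|[i Bi]] H; case: (H i).
  move=> H; apply: contrapT => nH; apply: H => i; split => Hi; apply: nH.
    by left; exists i.
  by right; exists i.
have mZ : forall m, measurable (cyl m (fun _ => ~` B `&` ~` Bt) : set (runs S)).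
  by move=> m; apply: cyl_meas => _; apply: measurableI; exact: measurableC.
have NZ : N = \bigcap_m (cyl m (fun _ => ~` B `&` ~` Bt) : set (runs S)).
  apply/seteqP; split => w /=.
    by move=> H m _ i _; case: (H i).
  by move=> H i; case: (H i Logic.I i (leqnn i)).
have mN : measurable N by rewrite NZ; exact: bigcapT_measurable.
have mGF : measurable (evGF A : set (runs S)).
  rewrite (_ : evGF A = \bigcap_m \bigcup_j [set w : runs S | A (w (m + j)%N)]).
    apply: bigcapT_measurable => m; apply: bigcupT_measurable => j.
    exact: pre_meas.
  apply/seteqP; split => w /=.
    move=> H m _; have [n mn An] := H m; exists (n - m)%N => //.
    by rewrite subnKC.
  move=> H m; have [j _ Aj] := H m Logic.I; exists (m + j)%N => //.
  exact: leq_addr.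
rewrite NC probability_setC //.
suff -> : P N = 0%E by rewrite sube0.
have PNG : P N = P (N `&` evGF A).
  have PD : P (N `\` evGF A) = 0%E.
    apply/eqP; rewrite eq_le measure_ge0 andbT.
  apply: (@le_trans _ _ (P (~` evGF A))).
    apply: le_measure; rewrite ?inE.
    - by apply: measurableD.
    - by apply: measurableC.
    - by move=> w [].
    by rewrite probability_setC // attractor subee.
  transitivity (0 + P (N `&` evGF A))%E; last by rewrite add0e.
  rewrite (measureDI P mN mGF); congr (_ + _)%E; exact: PD.
have mT : measurable T by apply: measurableI => //; exact: measurableC.
have C1 : forall m, (P (N `&` evGF A) <=
    (1 - q)%:E * P (cyl m (fun _ => ~` B `&` ~` Bt)))%E.
  move=> m.
  pose Cs j i := if (i <= m)%N then ~` B `&` ~` Bt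
    else if (i < m + j.+1)%N then ~` B `&` ~` T else T `&` ~` B.
  have mCs : forall j i, measurable (Cs j i).
    move=> j i; rewrite /Cs; case: ifP => _; first by apply: measurableI;
      exact: measurableC.
    by case: ifP => _; apply: measurableI => //; exact: measurableC.
  pose K j := (cyl (m + j.+1) (Cs j) : set (runs S)).
  pose E j := K j `&` [set w : runs S | forall i, ~ B (w (m + j.+1 + i)%N)].
  have mK : forall j, measurable (K j) by move=> j; exact: cyl_meas.
  have mE : forall j, measurable (E j).
    move=> j; apply: measurableI => //.
    rewrite (_ : [set w : runs S | _] =
       \bigcap_i [set w : runs S | (~` B) (w (m + j.+1 + i)%N)]).
      by apply: bigcapT_measurable => i; apply: pre_meas; exact: measurableC.
    by apply/seteqP; split => w /= H i; [move=> _; exact: H | exact: H i Logic.I].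
  have sub1 : N `&` evGF A `<=` \bigcup_j E j.
    move=> w [Nw GFw].
    have exP : exists n, (m < n)%N && `[< T (w n) >].
      have [n mn An] := GFw m.+1; exists n; apply/andP; split => //.
      by apply/asboolP; split => //; case: (Nw n).
    case: (ex_minnP exP) => n /andP[mn /asboolP Tn] nmin.
    have nE : n = (m + (n - m.+1).+1)%N by lia.
    exists (n - m.+1)%N => //; rewrite /E /K -nE; split.
    - move=> i lin; rewrite /Cs -nE; case: ifP => im; first by case: (Nw i).
      case: ifP => [iln|iln].
        split; first by case: (Nw i).
        move=> Ti; have := nmin i; rewrite (_ : (m < i)%N); last lia.
        have -> : `[< T (w i) >] by apply/asboolP.
        by move=> /(_ isT); lia.
      have -> : i = n by lia.
      by split => //; case: (Nw n).
    - by move=> i; case: (Nw (n + i)%N).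
  have disj : forall i j, (i < j)%N -> K i `&` K j = set0.
    move=> i j ij; apply/seteqP; split => // w /= [Ki Kj].
    have h1 := Ki (m + i.+1)%N (leqnn _).
    have h2 := Kj (m + i.+1)%N ltac:(lia).
    move: h1 h2; rewrite /Cs.
    have -> : (m + i.+1 <= m)%N = false by apply/negbTE; rewrite -ltnNge; lia.
    rewrite ltnn.
    have -> : (m + i.+1 < m + j.+1)%N by lia.
    by move=> [Tw _] [_ nT].
  have tK : trivIset setT K.
    apply/trivIsetP => i j _ _ ij.
    case: (ltngtP i j) => [lij|lji|eij]; first exact: disj.
      by rewrite setIC; exact: disj.
    by rewrite eij eqxx in ij.
  have HS := @measure_sigma_subadditive _ _ _ P (N `&` evGF A) E mE (measurableI _ _ mN mGF) sub1.
  apply: le_trans; first exact: HS.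
  apply: (@le_trans _ _ (\sum_(j <oo) ((1 - q)%:E * P (K j)))%E).
    apply: lee_nneseries => [i _ _|j _]; first exact: measure_ge0.
    apply: (bound HPr mB Hq mu (mCs j)).
    rewrite /Cs.
    have -> : (m + j.+1 <= m)%N = false by apply/negbTE; rewrite -ltnNge; lia.
    by rewrite ltnn => x [].
  rewrite nneseriesZl; last by move=> i _; exact: measure_ge0.
  rewrite -measure_semi_bigcup //; last exact: bigcupT_measurable.
  apply: lee_wpmul2l; first by rewrite lee_fin subr_ge0.
  apply: le_measure; rewrite ?inE //; first exact: bigcupT_measurable.
  move=> w [j _ Kw] i im; have := Kw i ltac:(lia).
  by rewrite /Cs im.
have H := le_lim_meas (Q := P) (a := 1 - q) ltac:(rewrite subr_ge0 //) mZ
  (cyl_noninc _) C1.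
rewrite -NZ -PNG in H.
have fN : P N \is a fin_num.
  rewrite ge0_fin_numE ?measure_ge0 //.
  by apply: (le_lt_trans (probability_le1 _ mN)); rewrite ltry.
have x0 : 0 <= fine (P N) by apply: fine_ge0; exact: measure_ge0.
move: H; rewrite -(fineK fN) -EFinM lee_fin => H.
have -> : fine (P N) = 0 by nra.
by [].
Qed.
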